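(* Let $\epsilon>0$ and $\alpha>0$ be constants. There exists a constant $\delta>0$ such that, for all sufficiently large $n$, if $V\subseteq\mathbb{Z}_2^{2n}$ is a uniformly random subspace of dimension $m\ge\alpha n$, then $\Pr[\dim(\mathrm{rad}(V))\ge\epsilon n]\le2^{-\delta n^2}$.
   Context: Symplectic inner product on $\mathbb{Z}_2^{2n}$: $(\mathbf a,\mathbf b)\odot(\mathbf a',\mathbf b')=\mathbf a\cdot\mathbf b'+\mathbf a'\cdot\mathbf b\pmod2$. For a subspace $V$, $V^\perp=\{\mathbf v:\mathbf v\odot\mathbf w=0\ \forall\mathbf w\in V\}$, and the radical is $\mathrm{rad}(V):=V\cap V^\perp$. *)

(* Defs.v *)
From HB Require Import structures.
From mathcomp Require Import all_boot all_order all_algebra.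
From mathcomp Require Import reals exp.
Set Implicit Arguments. Unset Strict Implicit. Unset Printing Implicit Defensive.
Import Order.TTheory GRing.Theory Num.Theory.
Local Open Scope ring_scope.

(* Vectors of Z_2^{2n}: row vectors of length n + n over F_2; the first n
   coordinates are the "a" part, the last n the "b" part. *)
Notation vec n := 'rV['F_2]_(n + n).

(* Symplectic inner product (a,b).(a',b') = a.b' + a'.b (mod 2). *)
Definition sympl (n : nat) (v w : vec n) : 'F_2 :=
  \sum_(i < n) (v 0 (lshift n i) * w 0 (rshift n i)
                + w 0 (lshift n i) * v 0 (rshift n i)).

Definition spanS (n : nat) (V : {set vec n}) : {vspace vec n} := <<enum V>>%VS.

Definition is_subspace (n : nat) (V : {set vec n}) : bool :=
  V == [set v | v \in spanS V].

Definition sdim (n : nat) (V : {set vec n}) : nat := \dim (spanS V).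

Definition sperp (n : nat) (V : {set vec n}) : {set vec n} :=
  [set v | [forall w in V, sympl v w == 0]].
Definition rad (n : nat) (V : {set vec n}) : {set vec n} := V :&: sperp V.

Definition subspaces_dim (n m : nat) : {set {set vec n}} :=
  [set V : {set vec n} | is_subspace V && (sdim V == m)].

Definition prob_big_rad (R : realType) (eps : R) (n m : nat) : R :=
  (#|[set V in subspaces_dim n m | eps * n%:R <= (sdim (rad V))%:R]|%:R
   / #|subspaces_dim n m|%:R).

(* Main.v *)
Require Import Defs.
From HB Require Import structures.
From mathcomp Require Import all_boot all_order all_algebra finfield.
From mathcomp Require Import reals exp.
From mathcomp Require Import zify.
From mathcomp.algebra_tactics Require Import ring lra.
Set Implicit Arguments. Unset Strict Implicit. Unset Printing Implicit Defensive.
Import Order.TTheory GRing.Theory Num.Theory.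

Module Aux.
Section Gen.
Variable T : finType.
Implicit Types (P Q : seq T -> T -> bool).

Fixpoint valid P (s : seq T) : bool :=
  if s is x :: s' then P s' x && valid P s' else true.

Fixpoint fseq P (j : nat) : seq (seq T) :=
  if j is j'.+1 then [seq x :: s | s <- fseq P j', x <- [seq y <- enum T | P s y]]
  else [:: [::]].

Lemma mem_fseq P j s : (s \in fseq P j) = valid P s && (size s == j).
Proof.
elim: j s => [|j IH] s /=.
  by case: s => [|x s]; rewrite inE ?andbF //= andbT.
apply/allpairsPdep/idP => [[s' [y [s's' ys' ->]]]|].
  move: s's'; rewrite IH => /andP[vs /eqP ss]; move: ys'.
  by rewrite mem_filter /= vs ss eqxx !andbT => /andP[-> _].
case: s => [|x s] //= /andP[/andP[Psx vs] ss]; exists s, x; split => //.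
  by rewrite IH vs.
by rewrite mem_filter Psx mem_enum.
Qed.

Lemma uniq_fseq P j : uniq (fseq P j).
Proof.
elim: j => [|j IH] //=; apply: allpairs_uniq_dep => //.
  by move=> s _; apply: filter_uniq; apply: enum_uniq.
by move=> [s x] [s' x'] _ _ /= [-> ->].
Qed.

Lemma size_fseqS P j :
  size (fseq P j.+1) = \sum_(s <- fseq P j) #|[pred y | P s y]|.
Proof.
rewrite /= size_allpairs_dep sumnE big_map; apply: eq_bigr => s _.
rewrite cardE /enum_mem size_filter size_filter count_filter.
by apply: eq_count => y /=; rewrite andbT.
Qed.

Lemma size_fseq_le P (e : nat -> nat) m :
  (forall j s, (j < m)%N -> s \in fseq P j -> (#|[pred y | P s y]| <= 2 ^ e j)%N) ->
  (size (fseq P m) <= 2 ^ (\sum_(j < m) e j))%N.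
Proof.
elim: m => [|m IH] H; first by rewrite big_ord0.
rewrite size_fseqS big_ord_recr /= expnD.
apply: (@leq_trans (\sum_(s <- fseq P m) 2 ^ e m)).
  by rewrite !big_seq; apply: leq_sum => s sm; apply: H.
rewrite big_const_seq count_predT iter_addn_0 mulnC leq_mul2r IH ?orbT //.
by move=> j s jm; apply: H; apply: ltnW.
Qed.

Lemma size_fseq_ge P (e : nat -> nat) m :
  (forall j s, (j < m)%N -> s \in fseq P j -> (2 ^ e j <= #|[pred y | P s y]|)%N) ->
  (2 ^ (\sum_(j < m) e j) <= size (fseq P m))%N.
Proof.
elim: m => [|m IH] H; first by rewrite big_ord0.
rewrite size_fseqS big_ord_recr /= expnD.
apply: (@leq_trans (\sum_(s <- fseq P m) 2 ^ e m)); last first.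
  by rewrite !big_seq; apply: leq_sum => s sm; apply: H.
rewrite big_const_seq count_predT iter_addn_0 mulnC leq_mul2l IH ?orbT //.
by move=> j s jm; apply: H; apply: ltnW.
Qed.

Lemma valid_sub P Q s : valid P s ->
  (forall x s', valid P s' -> P s' x -> {subset x :: s' <= s} -> Q s' x) ->
  valid Q s.
Proof.
elim: s => [|x s IH] //= /andP[Psx vs] H; apply/andP; split.
  by apply: H => //.
apply: IH => // y s' vs' Ps' sub; apply: H => // z zs.
by rewrite inE sub ?orbT.
Qed.

Lemma sum_count (U : finType) (g : seq T -> U) (B : {pred U}) (l : seq (seq T)) :
  \sum_(V in B) count (fun s => g s == V) l = count (fun s => g s \in B) l.
Proof.
elim: l => [|s l IH] /=; first by rewrite big1.
rewrite big_split /= IH; congr (_ + _)%N.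
case: (boolP (g s \in B)) => gB.
  rewrite (bigD1 (g s)) //= eqxx big1 // => V /andP[_ VB].
  by rewrite eq_sym (negbTE VB).
by rewrite big1 // => V VB; case: eqP => // e; rewrite e VB in gB.
Qed.
End Gen.
Local Open Scope ring_scope.
Section LA.
Variable n : nat.
Local Notation N := (n + n)%N.
Local Notation F := 'F_2.
Implicit Types x y : vec n.

Lemma card_F2 : #|F| = 2%N. Proof. by rewrite card_Fp. Qed.

Lemma card_vs (U : {vspace vec n}) : #|[pred x : vec n | x \in U]| = (2 ^ \dim U)%N.
Proof. by rewrite (card_vspace U) card_F2. Qed.

Lemma card_vec : #|{: vec n}| = (2 ^ N)%N.
Proof. by rewrite card_mx card_F2 mul1n. Qed.

Definition Pm : 'M[F]_N := block_mx 0 1%:M 1%:M 0.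

Lemma symplE x y : sympl x y = (x *m (y *m Pm)^T) 0 0.
Proof.
have -> : y *m Pm = row_mx (rsubmx y) (lsubmx y).
  by rewrite -{1}[y]hsubmxK /Pm mul_row_block !mulmx0 !mulmx1 add0r addr0.
rewrite tr_row_mx -[x in RHS]hsubmxK mul_row_col mxE !mxE /sympl -big_split /=.
by apply: eq_bigr => i _; rewrite !mxE [y 0 _ * _]mulrC.
Qed.

Lemma sympl_sym x y : sympl x y = sympl y x.
Proof. by rewrite /sympl; apply: eq_bigr => i _; rewrite addrC. Qed.


Lemma sympl_spanL (X : seq (vec n)) y :
  (forall x, x \in X -> sympl x y = 0) -> forall x, x \in <<X>>%VS -> sympl x y = 0.
Proof.
move=> H x /(@coord_span _ _ _ (in_tuple X)) ->.
rewrite symplE mulmx_suml summxE big1 // => i _.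
by rewrite -scalemxAl mxE -symplE H ?mulr0 // mem_nth.
Qed.

Lemma sympl_span (X Y : seq (vec n)) :
  (forall x y, x \in X -> y \in Y -> sympl x y = 0) ->
  forall x y, x \in <<X>>%VS -> y \in <<Y>>%VS -> sympl x y = 0.
Proof.
move=> H x y xX yY; rewrite sympl_sym; apply: (sympl_spanL _ yY) => z zY.
by rewrite sympl_sym; apply: (sympl_spanL _ xX) => w wX; apply: H.
Qed.

Lemma card_submx p (A : 'M[F]_(p, N)) :
  #|[pred x : vec n | (x <= A)%MS]| = (2 ^ \rank A)%N.
Proof.
rewrite -[RHS](_ : #|{: 'rV[F]_(\rank A)}| = _); last by rewrite card_mx card_F2 mul1n.
rewrite -(card_imset _ (@row_free_inj _ 1 _ _ _ (row_base_free A))).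
apply: eq_card => x; rewrite inE /=; apply/idP/imsetP.
  move=> xA; have : (x <= row_base A)%MS by rewrite eq_row_base.
  by case/submxP => y ->; exists y.
by case=> y _ ->; rewrite -(eq_row_base A) submxMl.
Qed.

Definition perpS (t : seq (vec n)) := [pred x : vec n | all (fun y => sympl x y == 0) t].

Lemma card_perp t : free t -> #|perpS t| = (2 ^ (N - size t))%N.
Proof.
move=> ft; set j := size t.
pose Xt : 'M[F]_(j, N) := \matrix_(i < j) t`_i.
pose M := (Xt *m Pm)^T.
have eM x i : (x *m M) 0 i = sympl x t`_i.
  rewrite symplE !mxE; apply: eq_bigr => k _; rewrite !mxE; congr (_ * _).
  by apply: eq_bigr => l _; rewrite !mxE.
have -> : #|perpS t| = #|[pred x : vec n | (x <= kermx M)%MS]|.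
  apply: eq_card => x; rewrite !inE sub_kermx; apply/(all_nthP 0)/eqP.
    by move=> H; apply/rowP => i; rewrite eM mxE; apply/eqP/H.
  by move=> H i ij; rewrite -(eM x (Ordinal ij)) H mxE.
rewrite card_submx mxrank_ker /M mxrank_tr mxrankMfree; last first.
  apply/row_freeP; exists Pm.
  by rewrite /Pm mulmx_block !mulmx0 !mulmx1 !addr0 !add0r -scalar_mx_block.
suff : row_free Xt by rewrite /row_free => /eqP ->.
rewrite -kermx_eq0; apply/eqP/row_matrixP => i; rewrite row0.
set r := row i (kermx Xt).
have : r *m Xt = 0 by rewrite -row_mul mulmx_ker row0.
rewrite mulmx_sum_row => H0; apply/rowP => l; rewrite mxE.
have FP := @freeP _ _ _ (in_tuple t); move/FP: ft => /(_ (fun l => r 0 l)) HH.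
have E : r 0 l = kermx Xt i l by rewrite /r mxE.
rewrite [RHS]mxE -E; apply: HH.
by rewrite -[RHS]H0; apply: eq_bigr => k _; rewrite rowK.
Qed.


Definition gs (s : seq (vec n)) : {set vec n} := [set v | v \in <<s>>%VS].
Implicit Types (V : {set vec n}) (s : seq (vec n)).

Lemma spanS_gs s : spanS (gs s) = <<s>>%VS.
Proof.
apply: subv_anti; apply/andP; split; apply/span_subvP => x.
  by rewrite mem_enum inE.
by move=> xs; apply: memv_span; rewrite mem_enum inE memv_span.
Qed.

Lemma gs_sub s : is_subspace (gs s).
Proof. by rewrite /is_subspace spanS_gs. Qed.

Lemma gs_dim s : free s -> sdim (gs s) = size s.
Proof. by rewrite /sdim spanS_gs => /eqP. Qed.

Lemma subspaceE V : is_subspace V -> V = [set v | v \in spanS V].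
Proof. by move/eqP. Qed.

Lemma valid_free (P : seq (vec n) -> vec n -> bool) s : (forall s x, P s x -> x \notin <<s>>%VS) -> valid P s -> free s.
Proof.
move=> H; elim: s => [|x s IH] /=; first by rewrite /free span_nil dimv0.
by case/andP => Psx vs; rewrite free_cons H // IH.
Qed.

Lemma dim_le_N (U : {vspace vec n}) : (\dim U <= N)%N.
Proof.
have : (#|[pred x : vec n | x \in U]| <= #|{: vec n}|)%N by apply: max_card.
by rewrite card_vs card_vec leq_exp2l.
Qed.

Lemma card_diff (U W : {vspace vec n}) : (W <= U)%VS ->
  #|[pred x : vec n | (x \in U) && (x \notin W)]| = (2 ^ \dim U - 2 ^ \dim W)%N.
Proof.
move=> WU; rewrite -card_vs -card_vs.
rewrite -(cardID [pred x : vec n | x \in W] [pred x : vec n | x \in U]).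
have -> : #|[predI [pred x : vec n | x \in U] & [pred x : vec n | x \in W]]| =
          #|[pred x : vec n | x \in W]|.
  apply: eq_card => x; rewrite !inE /=; apply/andP/idP => [[]//|xW].
  by split => //; apply: (subvP WU).
rewrite addKn; apply: eq_card => x; rewrite !inE /=.
by rewrite andbC.
Qed.

Lemma dimf : \dim (fullv : {vspace vec n}) = N.
Proof.
apply/eqP; rewrite -(eqn_exp2l _ _ (ltnSn 1)) -card_vs -card_vec; apply/eqP.
by apply: eq_card => x; rewrite !inE memvf.
Qed.

Lemma total_lb m : (m <= N)%N ->
  (2 ^ (m * N.-1) <= #|subspaces_dim n m| * 2 ^ (m * m))%N.
Proof.
move=> mN.
pose P0 := fun s (x : vec n) => x \notin <<s>>%VS.
have L1 : (2 ^ (\sum_(j < m) N.-1) <= size (fseq P0 m))%N.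
  apply: (@size_fseq_ge _ P0 (fun _ => N.-1)) => j s jm; rewrite mem_fseq => /andP[vs /eqP sj].
  have fs : free s := valid_free (fun s x h => h) vs.
  have -> : #|[pred y | P0 s y]| = (2 ^ N - 2 ^ j)%N.
    rewrite (_ : (2 ^ N - 2 ^ j)%N = (2 ^ \dim (fullv : {vspace vec n}) - 2 ^ \dim <<s>>)%N);
      last by rewrite dimf (eqP fs) sj.
    rewrite -card_diff ?subvf //.
    by apply: eq_card => x; rewrite !inE memvf.
  have N0 : N = N.-1.+1 by rewrite prednK // (leq_ltn_trans _ (leq_trans jm mN)).
  have : (2 ^ j <= 2 ^ N.-1)%N by rewrite leq_exp2l // -ltnS -N0 (leq_trans jm mN).
  by rewrite N0 expnS /=; lia.
have L2 : size (fseq P0 m) = count (fun s => gs s \in subspaces_dim n m) (fseq P0 m).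
  rewrite -[LHS]count_predT; apply: eq_in_count => s; rewrite mem_fseq => /andP[vs /eqP sm].
  have fs : free s := valid_free (fun s x h => h) vs.
  by rewrite /subspaces_dim in_set gs_sub gs_dim // sm eqxx.
rewrite -sum_count in L2.
rewrite sum_nat_const card_ord in L1.
apply: (leq_trans L1); rewrite L2.
apply: (@leq_trans (\sum_(V in subspaces_dim n m) 2 ^ (m * m))%N); last by rewrite sum_nat_const.
apply: leq_sum => V.
rewrite /subspaces_dim inE => /andP[sV /eqP dV].
pose Q := fun (_ : seq (vec n)) (x : vec n) => x \in spanS V.
rewrite -size_filter.
apply: (@leq_trans (size (fseq Q m))).
  apply: uniq_leq_size; first by apply: filter_uniq; apply: uniq_fseq.
  move=> s; rewrite mem_filter !mem_fseq => /andP[/eqP gV /andP[vs ->]].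
  rewrite andbT; apply: (valid_sub vs) => x s' _ _ sub.
  have : x \in gs s by rewrite inE memv_span // sub // mem_head.
  by rewrite gV {1}(subspaceE sV) inE.
rewrite (_ : (m * m = \sum_(j < m) m)%N); last by rewrite sum_nat_const card_ord.
apply: (@size_fseq_le _ Q (fun _ => m)) => j s _ _.
by rewrite (@eq_card _ _ [pred x : vec n | x \in spanS V]) // card_vs -dV.
Qed.

Lemma bad_ub m k :
  (#|[set V in subspaces_dim n m | (k <= sdim (Defs.rad V))%N]|
     * 2 ^ (\sum_(j < m) (if (j < k)%N then k.-1 else m.-1))
   <= 2 ^ (\sum_(j < m) (N - (j - (j - k)))))%N.
Proof.
pose P := fun s (x : vec n) =>
  (x \notin <<s>>%VS) && all (fun y => sympl x y == 0) (drop (size s - k) s).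
have Pfree : forall s x, P s x -> x \notin <<s>>%VS by move=> s0 x /andP[].
have UB : (size (fseq P m) <= 2 ^ (\sum_(j < m) (N - (j - (j - k)))))%N.
  apply: (@size_fseq_le _ P (fun j => N - (j - (j - k)))%N) => j s _.
  rewrite mem_fseq => /andP[vs /eqP sj].
  have fs : free s := valid_free Pfree vs.
  have fd : free (drop (size s - k) s).
    by apply: (@catr_free _ _ (take (size s - k) s)); rewrite cat_take_drop.
  apply: (@leq_trans #|perpS (drop (size s - k) s)|).
    by apply: subset_leq_card; apply/subsetP => x; rewrite !inE => /andP[_].
  by rewrite card_perp // size_drop sj.
apply: leq_trans UB.
set B := [set V in _ | _].
rewrite -sum_nat_const.
apply: (@leq_trans (\sum_(V in B) count (fun s => gs s == V) (fseq P m))); last first.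
  by rewrite sum_count count_size.
apply: leq_sum => V; rewrite inE => /andP[VS kR].
move: VS; rewrite /subspaces_dim in_set => /andP[sV /eqP dU].
set Us := spanS V; set Rs := spanS (Defs.rad V).
have hV := subspaceE sV.
have RU : (Rs <= Us)%VS.
  apply/span_subvP => y; rewrite mem_enum /rad inE => /andP[yV _].
  by move: yV; rewrite {1}hV inE.
have orth : forall x y, x \in Us -> y \in Rs -> sympl x y = 0.
  move=> x y xU yR; apply: (sympl_span _ xU yR) => a b; rewrite !mem_enum => aV.
  rewrite /rad !inE => /andP[_ /forallP bp].
  by have := bp a; rewrite aV /= => /eqP; rewrite sympl_sym.
pose P' := fun s (x : vec n) =>
  (x \notin <<s>>%VS) && (if (size s < k)%N then x \in Rs else x \in Us).
have inv : forall s, valid P' s ->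
    [/\ free s, {subset s <= Us} & ((size s <= k)%N -> {subset s <= Rs})].
  elim => [|x s IH] /=; first by rewrite /free span_nil dimv0.
  case/andP => /andP[xs xA] /IH [fs sU sR]; split.
  - by rewrite free_cons xs.
  - move=> y; rewrite inE => /orP[/eqP->|]; last exact: sU.
    by case: ifP xA => _ // /(subvP RU).
  - move=> sk y; rewrite inE => /orP[/eqP->|ys]; first by rewrite sk in xA.
    by apply: sR (ltnW sk) _ ys.
have dropR : forall s, valid P' s -> {subset drop (size s - k) s <= Rs}.
  elim => [|x s IH] //= /andP[/andP[_ xA] vs] y.
  case: (ltnP (size s) k) => sk.
    rewrite (_ : ((size s).+1 - k = 0)%N); last by lia.
    rewrite drop0 inE => /orP[/eqP->|ys]; first by rewrite sk in xA.
    by have [_ _ H] := inv s vs; apply: H (ltnW sk) _ ys.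
  by rewrite subSn //=; apply: IH.
have LB : (2 ^ (\sum_(j < m) (if (j < k)%N then k.-1 else m.-1)) <= size (fseq P' m))%N.
  apply: (@size_fseq_ge _ P' (fun j => if (j < k)%N then k.-1 else m.-1)) => j s jm.
  rewrite mem_fseq => /andP[vs /eqP sj].
  have [fs sU sR] := inv s vs.
  case: (ltnP j k) => jk.
    have sub : (<<s>> <= Rs)%VS by apply/span_subvP; apply: sR; rewrite sj ltnW.
    rewrite (@eq_card _ _ [pred x | (x \in Rs) && (x \notin <<s>>%VS)]); last first.
      by move=> x; rewrite !inE /P' sj jk andbC.
    rewrite card_diff // (eqP fs) sj.
    have kR' : (k <= \dim Rs)%N := kR.
    have h1 : (2 ^ j <= 2 ^ (\dim Rs).-1)%N by rewrite leq_exp2l //; lia.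
    have h2 : (2 ^ k.-1 <= 2 ^ (\dim Rs).-1)%N by rewrite leq_exp2l //; lia.
    have h3 : (2 ^ \dim Rs = 2 * 2 ^ (\dim Rs).-1)%N.
      by rewrite -expnS prednK //; lia.
    lia.
  have sub : (<<s>> <= Us)%VS by apply/span_subvP.
  rewrite (@eq_card _ _ [pred x | (x \in Us) && (x \notin <<s>>%VS)]); last first.
    by move=> x; rewrite !inE /P' sj ltnNge jk /= andbC.
  rewrite card_diff // (eqP fs) sj.
  have dU' : \dim Us = m := dU.
  rewrite dU'.
  have h1 : (2 ^ j <= 2 ^ m.-1)%N by rewrite leq_exp2l //; lia.
  have h3 : (2 ^ m = 2 * 2 ^ m.-1)%N by rewrite -expnS prednK //; lia.
  lia.
rewrite -size_filter; apply: (leq_trans LB); apply: uniq_leq_size; first exact: uniq_fseq.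
move=> s; rewrite mem_filter !mem_fseq => /andP[vs /eqP sm].
have [fs sU _] := inv s vs.
apply/andP; split.
  have e : <<s>>%VS = Us.
    apply/eqP; rewrite eqEdim; apply/andP; split; first by apply/span_subvP.
    by rewrite (eqP fs) sm -dU.
  by apply/eqP; rewrite [in RHS]hV /gs e.
rewrite sm eqxx andbT; apply: (valid_sub vs) => x s' vs' /andP[xs xA] _.
rewrite /P xs /=; apply/allP => y yd; apply/eqP/orth; last exact: dropR yd.
by case: ifP xA => _ // /(subvP RU).
Qed.

Lemma sdim_rad_le V : is_subspace V -> (sdim (Defs.rad V) <= sdim V)%N.
Proof.
move=> sV; apply: dimvS; apply/span_subvP => y; rewrite mem_enum /rad inE => /andP[yV _].
by move: yV; rewrite {1}(subspaceE sV) inE.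
Qed.

End LA.

Lemma sum_split (f : nat -> nat) k d :
  (\sum_(j < k + d) f j = \sum_(j < k) f j + \sum_(i < d) f (k + i))%N.
Proof. by rewrite big_split_ord. Qed.

Lemma sum_split' (f : nat -> nat) k m : (k <= m)%N ->
  (\sum_(j < m) f j = \sum_(j < k) f j + \sum_(i < m - k) f (k + i))%N.
Proof. by move=> /subnKC <-; rewrite sum_split addKn. Qed.

Lemma tri_sum k : (2 * \sum_(j < k) j = k * k.-1)%N.
Proof.
elim: k => [|k IH]; first by rewrite big_ord0.
rewrite big_ord_recr /= mulnDr IH; case: k {IH} => //= k; lia.
Qed.

Lemma sum_min k m : (k <= m)%N ->
  (\sum_(j < m) (j - (j - k)) = \sum_(j < k) j + (m - k) * k)%N.
Proof.
move=> km; rewrite (sum_split' (fun j => j - (j - k))%N km); congr (_ + _)%N.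
  by apply: eq_bigr => j _; rewrite (_ : (j - k = 0)%N) ?subn0 //; apply/eqP; rewrite subn_eq0 ltnW.
rewrite (eq_bigr (fun _ => k)) ?sum_nat_const ?card_ord // => i _; lia.
Qed.

Lemma sum_ifk k m : (k <= m)%N ->
  (\sum_(j < m) (if (j < k)%N then k.-1 else m.-1) = k * k.-1 + (m - k) * m.-1)%N.
Proof.
move=> km; rewrite (sum_split' (fun j => if (j < k)%N then k.-1 else m.-1) km).
rewrite (eq_bigr (fun _ => k.-1)) ?sum_nat_const ?card_ord; last by move=> j _; rewrite ltn_ord.
congr (_ + _)%N.
rewrite (eq_bigr (fun _ => m.-1)) ?sum_nat_const ?card_ord // => i _.
by rewrite ltnNge leq_addr.
Qed.

Lemma sum_E N k m : (k <= N)%N ->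
  (\sum_(j < m) (N - (j - (j - k))) + \sum_(j < m) (j - (j - k)) = m * N)%N.
Proof.
move=> kN; rewrite -big_split /= (eq_bigr (fun _ => N)).
  by rewrite sum_nat_const card_ord mulnC.
move=> j _; rewrite subnK //; apply: leq_trans kN; lia.
Qed.

Lemma key_nat N m k A S : (k <= m)%N -> (m <= N)%N ->
  (A * 2 ^ (\sum_(j < m) (if (j < k)%N then k.-1 else m.-1))
     <= 2 ^ (\sum_(j < m) (N - (j - (j - k)))))%N ->
  (2 ^ (m * N.-1) <= S * 2 ^ (m * m))%N ->
  (A * 2 ^ (\sum_(j < k) j) <= S * 2 ^ (2 * m))%N.
Proof.
move=> km mN H1 H2.
have eE := sum_E m (leq_trans km mN).
rewrite sum_min // in eE.
rewrite sum_ifk // in H1.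
have eT := tri_sum k.
set E := (\sum_(j < m) _)%N in H1 eE.
set T := (\sum_(j < k) j)%N in eE eT *.
set F := (k * k.-1 + (m - k) * m.-1)%N in H1.
have eX : (E + m * m + T = m * N.-1 + F + 2 * m)%N.
  rewrite /F; case: (posnP m) => [m0|mpos].
    have k0 : k = 0%N by apply/eqP; rewrite -leqn0 -m0.
    rewrite m0 k0 in eE eT *; lia.
  have N1 : (N.-1.+1 = N)%N by rewrite prednK //; apply: leq_trans mN.
  have f2 : (forall a b, 0 < b -> a * b.-1 + a = a * b)%N.
    by move=> a [|b] //= _; rewrite mulnS addnC.
  have f1 := f2 m N (leq_trans mpos mN).
  set d := (m - k)%N in eE *.
  have md : m = (k + d)%N by rewrite /d subnKC.
  have f3 := f2 d m mpos.
  have f5 : (m * m = k * k + 2 * (d * k) + d * d)%N by rewrite md; ring.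
  have f6 : (d * m = d * k + d * d)%N by rewrite md; ring.
  case: (posnP k) => [k0|kpos].
    rewrite k0 in eT eE f5 f6 *; lia.
  have f4 := f2 k k kpos.
  lia.
have : (A * 2 ^ T * 2 ^ (m * N.-1 + F) <= S * 2 ^ (2 * m) * 2 ^ (m * N.-1 + F))%N.
  have -> : (A * 2 ^ T * 2 ^ (m * N.-1 + F) = (A * 2 ^ F) * 2 ^ (m * N.-1) * 2 ^ T)%N.
    by rewrite expnD; ring.
  have -> : (S * 2 ^ (2 * m) * 2 ^ (m * N.-1 + F) = 2 ^ E * (S * 2 ^ (m * m)) * 2 ^ T)%N.
    by rewrite -mulnA -expnD addnC -eX !expnD; ring.
  by apply: leq_mul => //; apply: leq_mul.
by rewrite leq_pmul2r // expn_gt0.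
Qed.

End Aux.
Import Aux.
Unset Implicit Arguments.
Local Open Scope ring_scope.

Theorem lemmaD6 (R : realType) (eps alpha : R) :
  0 < eps -> 0 < alpha ->
  exists delta : R, 0 < delta /\
    exists N : nat, forall n : nat, (N <= n)%N ->
      forall m : nat, alpha * n%:R <= m%:R ->
        prob_big_rad eps n m <= powR 2 (- (delta * (n%:R ^+ 2))).
Proof.
move=> e0 a0.
exists (eps ^+ 2 / 4); split; first by rewrite divr_gt0 // exprn_gt0.
pose c := (6 * eps + 16) / eps ^+ 2 + 2 / eps.
exists (Num.truncn c).+1 => n Nn m _.
rewrite /prob_big_rad.
set S := #|subspaces_dim n m|.
set Bb := #|[set V in subspaces_dim n m | _]|.
have pw0 := powR_ge0 2 (- (eps ^+ 2 / 4 * n%:R ^+ 2)).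
case: (posnP S) => [S0|Spos].
  by rewrite S0 invr0 mulr0.
have mN : (m <= n + n)%N.
  have /card_gt0P [V] := Spos.
  by rewrite /subspaces_dim in_set => /andP[_ /eqP <-]; apply: dim_le_N.
set k := Num.truncn (eps * n%:R).
set Bk := [set V in subspaces_dim n m | (k <= sdim (Defs.rad V))%N].
have BB : (Bb <= #|Bk|)%N.
  apply: subset_leq_card; apply/subsetP => V; rewrite !inE => /andP[-> h] /=.
  rewrite -(ler_nat R); apply: le_trans h; rewrite truncn_le.
  by rewrite mulr_ge0 // ltW.
case: (posnP #|Bk|) => [B0|Bpos].
  have -> : Bb = 0%N by apply/eqP; rewrite -leqn0 -B0.
  by rewrite mul0r.
have km : (k <= m)%N.
  have /card_gt0P [V] := Bpos.
  rewrite inE /subspaces_dim in_set => /andP[/andP[sV /eqP dV] kV].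
  by apply: leq_trans kV _; rewrite -dV; apply: sdim_rad_le.
have key := key_nat km mN (bad_ub n m k) (total_lb mN).
set T := (\sum_(j < k) j)%N in key.
have H : (Bb * 2 ^ T <= S * 2 ^ (2 * m))%N.
  by apply: leq_trans key; rewrite leq_mul2r BB orbT.
have eT := tri_sum k; rewrite -/T in eT.
set Q := 2 `^ (- (eps ^+ 2 / 4 * n%:R ^+ 2)) in pw0 *.
have hn : c < n%:R.
  apply: (lt_le_trans (truncnS_gt c)); rewrite ler_nat; exact: Nn.
have c1 : 0 <= (6 * eps + 16) / eps ^+ 2 by rewrite divr_ge0 // ?exprn_ge0 ?ltW //; lra.
have hn1 : 2 < eps * n%:R.
  have : 2 / eps < n%:R by rewrite /c in hn; lra.
  by rewrite ltr_pdivrMr // mulrC.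
have hn2 : 6 * eps + 16 < eps ^+ 2 * n%:R.
  have : (6 * eps + 16) / eps ^+ 2 < n%:R.
    have : 0 <= 2 / eps by rewrite divr_ge0 // ltW.
    by rewrite /c in hn; lra.
  by rewrite [eps ^+ 2 * _]mulrC -ltr_pdivrMr ?exprn_gt0.
have hk : eps * n%:R < k%:R + 1.
  by have := truncnS_gt (eps * n%:R); rewrite -/k -addn1 natrD.
have kpos : (0 < k)%N.
  by rewrite -(ltr_nat R); lra.
have hT : 2 * (T%:R : R) = k%:R * (k%:R - 1).
  by have := congr1 (fun x : nat => x%:R : R) eT; rewrite /= !natrM -subn1 natrB.
have hm : (m%:R : R) <= 2 * n%:R.
  by rewrite -(ler_nat R) natrD in mN; lra.
have n0 : (0 : R) <= n%:R by [].
have hx : eps ^+ 2 * n%:R ^+ 2 = (eps * n%:R) ^+ 2 by rewrite exprMn.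
have h1 : (eps * n%:R - 1) * (eps * n%:R - 2) <= k%:R * (k%:R - 1).
  by apply: ler_pM; lra.
have h2 : 0 <= n%:R * (eps ^+ 2 * n%:R - 6 * eps - 16).
  by apply: mulr_ge0 => //; lra.
have hE : (2 * m)%:R + eps ^+ 2 / 4 * n%:R ^+ 2 <= (T%:R : R).
  rewrite natrM; lra.
have HR : (Bb%:R : R) * 2 ^+ T <= S%:R * 2 ^+ (2 * m).
  by rewrite -!natrX -!natrM ler_nat.
have HQ : (2 : R) ^+ (2 * m) <= Q * 2 ^+ T.
  rewrite /Q -[X in X <= _]powR_mulrn // -[(2 : R) ^+ T]powR_mulrn //.
  rewrite -powRD; last by rewrite implybE pnatr_eq0 orbT.
  apply: ler_powR; first by rewrite ler1n.
  lra.
rewrite ler_pdivrMr ?ltr0n //.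
have p2 : (0 : R) < 2 ^+ T by rewrite exprn_gt0.
rewrite -(ler_pM2r p2); apply: (le_trans HR).
by rewrite [Q * _]mulrC -mulrA ler_pM2l ?ltr0n.
Qed.
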